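(* Let $F:[n]^\ell\to\mathbb R$ be permutation-invariant and $0\le i\le\ell$. Then $$\eta_i\le2^i\binom{\ell}{i}\sum_{j=0}^i\binom{i}{j}\mathbb{E}_{Y\in[n]^j}\big[\delta_Y(F)^2\big],$$ and moreover this inequality has a degree-2 sum-of-squares proof in the formal variables $(F(X))_{X\in[n]^\ell}$ from the permutation-invariance axioms $\mathcal{A}_{inv}$.
   Context: For $T\in[n]^\ell$, $\chi_T(X)=\exp(\frac{2\pi i}{n}\sum_jT_jx_j)$ on $[n]^\ell=(\mathbb Z/n\mathbb Z)^\ell$, $|T|=|\{j:T_j\ne0\}|$, $\hat F(T)=\mathbb{E}_XF(X)\overline{\chi_T(X)}$, $F_i=\sum_{|T|=i}\hat F(T)\chi_T$, and $\eta_i=\mathbb{E}_{X\in[n]^\ell}|F_i(X)|^2=\sum_{|T|=i}|\hat F(T)|^2$. $F$ is permutation-invariant if $F(x_1,\dots,x_\ell)=F(x_{\sigma(1)},\dots,x_{\sigma(\ell)})$ for all $\sigma\in S_\ell$; $\mathcal{A}_{inv}$ is the set of these equalities. For $Y\in[n]^j$, $\delta_Y(F)=\mathbb{E}_{x\in[n]^{\ell-j}}F(Y,x)$, and $\delta_\emptyset(F)=\mathbb{E}_XF(X)$. *)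

(* Defs.v *)
From HB Require Import structures.
From mathcomp Require Import all_boot all_order all_algebra all_fingroup.
From mathcomp Require Import reals trigo.
From mathcomp Require Import complex.
Set Implicit Arguments. Unset Strict Implicit. Unset Printing Implicit Defensive.
Import Order.TTheory GRing.Theory Num.Theory.
Local Open Scope ring_scope.

Definition pt (l n : nat) := {ffun 'I_l -> 'I_n}.

Definition expect (R : realType) (T : finType) (f : T -> R) : R :=
  (\sum_(x : T) f x) / #|T|%:R.

Definition expectC (R : realType) (T : finType) (f : T -> R[i]) : R[i] :=
  (\sum_(x : T) f x) / #|T|%:R.

Definition permpt (l n : nat) (s : {perm 'I_l}) (X : pt l n) : pt l n :=
  [ffun k => X (s k)].

Definition perm_invariant (R : realType) (l n : nat) (F : pt l n -> R) : Prop :=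
  forall (s : {perm 'I_l}) (X : pt l n), F X = F (permpt s X).

Definition chi (R : realType) (l n : nat) (T X : pt l n) : R[i] :=
  let th : R := (2 * pi / n%:R) * (\sum_(j < l) (nat_of_ord (T j) * nat_of_ord (X j))%:R) in
  ((cos th)%:C + 'i%C * (sin th)%:C)%C.

Definition fhat (R : realType) (l n : nat) (F : pt l n -> R) (T : pt l n) : R[i] :=
  expectC (fun X : pt l n => (F X)%:C%C * ((chi R T X)^*)%C).

Definition wt (l n : nat) (T : pt l n) : nat := #|[set j | nat_of_ord (T j) != 0%N]|.

Definition eta_i (R : realType) (l n : nat) (F : pt l n -> R) (i : nat) : R[i] :=
  \sum_(T : pt l n | wt T == i) `|fhat F T| ^+ 2.

(* (Y, x) in [n]^l for Y in [n]^j, x in [n]^(l-j), j <= l *)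
Definition catpt (l n j : nat) (hj : (j <= l)%N) (Y : pt j n) (x : pt (l - j) n) : pt l n :=
  [ffun k => match split (cast_ord (esym (subnKC hj)) k) with
             | inl a => Y a
             | inr b => x b end].

Definition delta (R : realType) (l n j : nat) (hj : (j <= l)%N) (F : pt l n -> R) (Y : pt j n) : R :=
  expect (fun x : pt (l - j) n => F (catpt hj Y x)).

Definition Edelta2 (R : realType) (l n j : nat) (hj : (j <= l)%N) (F : pt l n -> R) : R :=
  expect (fun Y : pt j n => (delta hj F Y) ^+ 2).

Definition rhsC7 (R : realType) (l n i : nat) (hi : (i <= l)%N) (F : pt l n -> R) : R :=
  (2 ^+ i * 'C(l, i)%:R) *
    \sum_(j < i.+1) 'C(i, j)%:R * Edelta2 (leq_trans (leq_ord j) hi) F.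

(* A degree-2 sum-of-squares proof of  rhs >= eta  in the formal variables
   v = (F(X))_X from the axioms A_inv = { F(X) - F(sigma X) = 0 }:
   a polynomial identity (checked pointwise on all real v, which is equivalent
   over the infinite field R)
     rhs(v) - eta(v) = sum_k (c_k + <a_k, v>)^2
                       + sum_{X, sigma} (d_{X,sigma} + <b_{X,sigma}, v>) (v(X) - v(sigma X)),
   i.e. squares of polynomials of degree <= 1 plus multiples of the axioms by
   polynomials of degree <= 1 (so every term has degree <= 2). *)
Definition sos2_proof (R : realType) (l n i : nat) (hi : (i <= l)%N) : Prop :=
  exists (sq : seq (R * (pt l n -> R)))
         (d : pt l n -> {perm 'I_l} -> R)
         (b : pt l n -> {perm 'I_l} -> pt l n -> R),
  forall v : pt l n -> R,
    ((rhsC7 hi v)%:C - eta_i v i)%C =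
    ((\sum_(p <- sq) (p.1 + \sum_(Z : pt l n) p.2 Z * v Z) ^+ 2
      + \sum_(X : pt l n) \sum_(s : {perm 'I_l})
           (d X s + \sum_(Z : pt l n) b X s Z * v Z) * (v X - v (permpt s X)))%:C)%C.

(* Main.v *)
Set Warnings "-notation-overridden,-ambiguous-paths,-notation-incompatible-prefix".
Require Import Defs.
From HB Require Import structures.
From mathcomp Require Import all_boot all_order all_algebra all_fingroup.
From mathcomp Require Import reals trigo.
From mathcomp Require Import complex.
From mathcomp Require Import ring lra.
Import Order.TTheory GRing.Theory Num.Theory.
Local Open Scope ring_scope.
Local Open Scope complex_scope.
Definition cis {R : realType} (a : R) : R[i] := (cos a)%:C + 'i * (sin a)%:C.
Definition om (R : realType) (n : nat) : R[i] := cis (2 * pi / n%:R).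

Lemma cs_mul (R : realType) (a b c d : R) :
  (a%:C + 'i * b%:C) * (c%:C + 'i * d%:C) = (a * c - b * d)%:C + 'i * (b * c + a * d)%:C.
Proof. apply/eqP; rewrite eq_complex /=; apply/andP; split; apply/eqP; ring. Qed.

Lemma cis_exp (R : realType) (a : R) k : cis a ^+ k = cis (a * k%:R).
Proof.
elim: k => [|k IH]; first by rewrite expr0 mulr0 /cis cos0 sin0 mulr0 addr0.
rewrite exprS mulrC IH /cis cs_mul -cosD -sinD -addn1 natrD mulrDr mulr1.
by [].
Qed.

Lemma cis_conj (R : realType) (a : R) : cis a * (cis a)^*%C = 1.
Proof.
apply/eqP; rewrite eq_complex /=; apply/andP; split; apply/eqP; last by ring.
rewrite -[RHS](cos2Dsin2 a) !expr2; ring.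
Qed.

Lemma om_n (R : realType) n : (0 < n)%N -> om R n ^+ n = 1.
Proof.
move=> hn; rewrite /om cis_exp mulfVK ?pnatr_eq0 -?lt0n //.
have -> : (2:R) * pi = pi *+ 2 by rewrite mulr_natl.
by rewrite /cis cos2pi sin2pi mulr0 addr0.
Qed.

Lemma cos_lt1 (R : realType) (t : R) : 0 < t < pi *+ 2 -> cos t < 1.
Proof.
case/andP=> t0 t2.
have hs : 0 < sin (t / 2).
  apply: sin_gt0_pi; apply/andP; split; first by rewrite divr_gt0.
  by rewrite ltr_pdivrMr // mulr_natr.
have ht : t = (t / 2) *+ 2 by rewrite -mulr_natr divfK // pnatr_eq0.
rewrite ht cos_mulr2n cos2sin2.
have : 0 < sin (t / 2) ^+ 2 by apply: exprn_gt0.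
lra.
Qed.

Lemma om_prim (R : realType) n : (0 < n)%N -> n.-primitive_root (om R n).
Proof.
move=> hn; apply/andP; split => //; apply/forallP => j; rewrite unity_rootE.
case: (eqVneq j.+1 n) => [->|hj]; first by rewrite om_n // eqxx.
rewrite eqbF_neg; apply/eqP.
rewrite /om cis_exp => /(congr1 (@complex.Re R)) /=.
rewrite mulr0 subr0 => /eqP; apply/negP; rewrite lt_eqF //.
rewrite mul0r addr0; apply: cos_lt1; apply/andP; split.
  by rewrite mulr_gt0 ?divr_gt0 ?mulr_gt0 ?pi_gt0 ?ltr0n.
have jn : (j.+1 < n)%N by rewrite ltn_neqAle hj ltn_ord.
have h1 : j.+1%:R / n%:R < (1:R) by rewrite ltr_pdivrMr ?ltr0n // mul1r ltr_nat.
rewrite mulrAC -mulrA -mulr_natr.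
have hp : 0 < (pi:R) := pi_gt0 R.
set a := (_ / _) in h1 *. nra.

Qed.
Arguments chi : simpl never.

Definition dot {l n : nat} (T X : pt l n) : nat := \sum_(j < l) (T j * X j)%N.

Lemma chi_om (R : realType) l n (T X : pt l n) : chi R T X = om R n ^+ dot T X.
Proof. by rewrite /om cis_exp /chi /dot natr_sum. Qed.

Lemma chi_prod (R : realType) l n (T X : pt l n) :
  chi R T X = \prod_(j < l) (om R n ^+ X j) ^+ T j.
Proof.
rewrite chi_om /dot (big_morph (fun k => om R n ^+ k) (exprD _) (expr0 _)).
by apply: eq_bigr => j _; rewrite -exprM mulnC.
Qed.

Lemma om_conj (R : realType) n k : om R n ^+ k * (om R n ^+ k)^*%C = 1.
Proof. by rewrite /om cis_exp cis_conj. Qed.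

Lemma geo_sum (R : realType) n (hn : (0 < n)%N) (a b : 'I_n) :
  \sum_(t < n) (om R n ^+ a * (om R n ^+ b)^*%C) ^+ t = (a == b)%:R * n%:R.
Proof.
case: (eqVneq a b) => [<-|ne].
  by rewrite om_conj (eq_bigr (fun _ => 1)) ?sumr_const ?card_ord ?mul1r // => t _; rewrite expr1n.
set z := (om R n ^+ a * (om R n ^+ b)^*%C).
have zn : z ^+ n = 1.
  rewrite /z exprMn -rmorphXn -!exprM mulnC exprM om_n // expr1n mulnC exprM om_n //.
  by rewrite expr1n rmorph1 mulr1.
have z1 : z != 1.
  apply/eqP => hz; move: ne => /eqP; apply.
  have : om R n ^+ a = om R n ^+ b.
    by rewrite -[LHS]mulr1 -(om_conj R n b) [om R n ^+ b * _]mulrC mulrA -/z hz mul1r.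
  move/eqP; rewrite (eq_prim_root_expr (om_prim R n hn)) !modn_small //.
  by move/eqP/val_inj.
have := subrX1 z n; rewrite zn subrr => /esym/eqP; rewrite mulf_eq0 subr_eq0 (negbTE z1) /=.
by move/eqP->; rewrite mul0r.
Qed.

Lemma orth (R : realType) m n (hn : (0 < n)%N) (X X' : pt m n) :
  \sum_(T : pt m n) chi R T X' * (chi R T X)^*%C = (X' == X)%:R * (n ^ m)%:R.
Proof.
have -> : \sum_(T : pt m n) chi R T X' * (chi R T X)^*%C
   = \sum_(T : {ffun 'I_m -> 'I_n}) \prod_(j < m) (om R n ^+ X' j * (om R n ^+ X j)^*%C) ^+ T j.
  apply: eq_bigr => T _; rewrite !chi_prod rmorph_prod -big_split /=.
  by apply: eq_bigr => j _; rewrite rmorphXn exprMn.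
rewrite -(bigA_distr_bigA (fun j (t : 'I_n) => (om R n ^+ X' j * (om R n ^+ X j)^*%C) ^+ t)) /=.
under eq_bigr => j _ do rewrite geo_sum //.
case: (eqVneq X' X) => [->|ne].
  rewrite (eq_bigr (fun _ => n%:R)) => [|j _]; last by rewrite eqxx mul1r.
  by rewrite prodr_const card_ord natrX mul1r.
have [j hj] : exists j, X' j != X j.
  apply/existsP; apply: contraNT ne => /existsPn h; apply/eqP/ffunP => j.
  by apply/eqP; move: (h j); rewrite negbK.
by rewrite (bigD1 j) //= (negbTE hj) !mul0r.
Qed.

Lemma orth' (R : realType) m n (hn : (0 < n)%N) (X X' : pt m n) :
  \sum_(T : pt m n) (chi R T X)^*%C * chi R T X' = (X' == X)%:R * (n ^ m)%:R.
Proof. by rewrite -(orth R m n hn); apply: eq_bigr => T _; rewrite mulrC. Qed.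

Lemma card_pt m n : #|pt m n| = (n ^ m)%N.
Proof. by rewrite /pt card_ffun !card_ord. Qed.

Lemma conjRC {R : realType} (x : R) (y : R[i]) : (x%:C * y)^*%C = x%:C * y^*%C.
Proof. by case: y => a b; apply/eqP; rewrite eq_complex /=; apply/andP; split; apply/eqP; ring. Qed.

Lemma parseval (R : realType) m n (hn : (0 < n)%N) (f : pt m n -> R) :
  \sum_(T : pt m n) `|fhat f T| ^+ 2 = (expect (fun X => f X ^+ 2))%:C.
Proof.
have N0 : (#|pt m n|%:R : R[i]) != 0 by rewrite pnatr_eq0 card_pt -lt0n expn_gt0 hn.
under eq_bigr => T _ do rewrite sqr_normc.
rewrite /fhat /expectC /expect.
have cj : forall T : pt m n, ((\sum_X (f X)%:C * (chi R T X)^*%C) / #|pt m n|%:R)^*%C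
    = (\sum_X (f X)%:C * chi R T X) / #|pt m n|%:R.
  move=> T; rewrite rmorphM fmorphV rmorph_nat rmorph_sum; congr (_ * _).
  by apply: eq_bigr => X _; have := conjRC (f X) (chi R T X)^*%C; rewrite conjcK => <-.
under eq_bigr => U _ do rewrite cj mulrACA big_distrl.
rewrite -big_distrl /= exchange_big /=.
under eq_bigr => i _.
  under eq_bigr => U _ do rewrite big_distrr /=.
  rewrite exchange_big /=.
  under eq_bigr => X' _.
    under eq_bigr => U _ do rewrite mulrACA.
    rewrite -big_distrr orth' //.
    over.
  rewrite (bigD1 i) //= eqxx big1 ?addr0 => [|X' hX']; last by rewrite (negbTE hX') !mul0r mulr0.
  over.
rewrite /= -big_distrl /= card_pt rmorphM fmorphV /= rmorph_nat rmorph_sum /=.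
rewrite -mulrA; congr (_ * _).
  by apply: eq_bigr => X _; rewrite expr2 rmorphM.
have Nz : ((n ^ m)%:R : R[i]) != 0 by rewrite pnatr_eq0 -lt0n expn_gt0 hn.
by rewrite mul1r mulrA mulfV // mul1r.
Qed.

Arguments catpt : simpl never.
Arguments fhat : simpl never.

Lemma catpt_lo l n j (hj : (j <= l)%N) (Y : pt j n) (x : pt (l - j) n) (a : 'I_j) :
  catpt hj Y x (cast_ord (subnKC hj) (lshift (l - j) a)) = Y a.
Proof.
rewrite /catpt ffunE cast_ordK.
by rewrite -[lshift _ a]/(unsplit (inl a)) unsplitK.
Qed.

Lemma catpt_hi l n j (hj : (j <= l)%N) (Y : pt j n) (x : pt (l - j) n) (b : 'I_(l - j)) :
  catpt hj Y x (cast_ord (subnKC hj) (rshift j b)) = x b.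
Proof.
rewrite /catpt ffunE cast_ordK.
by rewrite -[rshift _ b]/(unsplit (inr b)) unsplitK.
Qed.

Definition splitpt {l n j} (hj : (j <= l)%N) (X : pt l n) : pt j n * pt (l - j) n :=
  ([ffun a => X (cast_ord (subnKC hj) (lshift (l - j) a))],
   [ffun b => X (cast_ord (subnKC hj) (rshift j b))]).

Lemma sum_ord_split (V : nmodType) l j (hj : (j <= l)%N) (G : 'I_l -> V) :
  \sum_(k < l) G k = \sum_(a < j) G (cast_ord (subnKC hj) (lshift (l - j) a))
                     + \sum_(b < l - j) G (cast_ord (subnKC hj) (rshift j b)).
Proof.
rewrite (reindex (cast_ord (subnKC hj))) /=; last first.
  by exists (cast_ord (esym (subnKC hj))) => k _; rewrite ?cast_ordK ?cast_ordKV.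
by rewrite big_split_ord.
Qed.

Lemma catpt_bij l n j (hj : (j <= l)%N) :
  bijective (fun p : pt j n * pt (l - j) n => catpt hj p.1 p.2).
Proof.
exists (splitpt hj).
  case=> Y x; rewrite /splitpt; congr (_, _); apply/ffunP => a; rewrite ffunE.
    exact: catpt_lo.
  exact: catpt_hi.
move=> X; apply/ffunP => k /=; rewrite /catpt ffunE.
case: splitP => [a|b] /= e; rewrite ffunE; congr (X _); apply: val_inj => /=; by rewrite -e.
Qed.

Lemma sum_catpt (V : nmodType) l n j (hj : (j <= l)%N) (G : pt l n -> V) :
  \sum_(X : pt l n) G X = \sum_(Y : pt j n) \sum_(x : pt (l - j) n) G (catpt hj Y x).
Proof.
rewrite pair_bigA /= (reindex (fun p : pt j n * pt (l - j) n => catpt hj p.1 p.2)) //.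
by apply: onW_bij; apply: catpt_bij.
Qed.
Arguments sum_ord_split {V l j} hj G.
Arguments sum_catpt {V l n j} hj G.

Definition ext {l n j} (hn : (0 < n)%N) (hj : (j <= l)%N) (T' : pt j n) : pt l n :=
  catpt hj T' [ffun _ => Ordinal hn].

Lemma dot_ext l n j (hn : (0 < n)%N) (hj : (j <= l)%N) (T' Y : pt j n) (x : pt (l - j) n) :
  dot (ext hn hj T') (catpt hj Y x) = dot T' Y.
Proof.
rewrite /dot (sum_ord_split hj) /ext.
under eq_bigr => a _ do rewrite !catpt_lo.
rewrite [X in _ + X]big1 ?addr0 // => b _.
by rewrite !catpt_hi ffunE /= mul0n.
Qed.

Lemma chi_ext (R : realType) l n j (hn : (0 < n)%N) (hj : (j <= l)%N) (T' Y : pt j n) (x : pt (l - j) n) :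
  chi R (ext hn hj T') (catpt hj Y x) = chi R T' Y.
Proof. by rewrite !chi_om dot_ext. Qed.

Lemma fhat_ext (R : realType) l n j (hn : (0 < n)%N) (hj : (j <= l)%N) (w : pt l n -> R) (T' : pt j n) :
  fhat w (ext hn hj T') = fhat (delta hj w) T'.
Proof.
rewrite /fhat /expectC /delta /expect (sum_catpt hj).
under eq_bigr => Y _ do under eq_bigr => x _ do rewrite chi_ext.
under eq_bigr => Y _ do rewrite -big_distrl /= -rmorph_sum.
under [in RHS]eq_bigr => Y _ do rewrite rmorphM fmorphV /= rmorph_nat mulrAC.
rewrite -big_distrl /= -[in RHS]mulrA -invfM -natrM !card_ffun !card_ord -expnD subnK //.
Qed.

Lemma Phi_fourier (R : realType) l n j (hn : (0 < n)%N) (hj : (j <= l)%N) (w : pt l n -> R) :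
  (Edelta2 hj w)%:C = \sum_(T' : pt j n) `|fhat w (ext hn hj T')| ^+ 2.
Proof.
under eq_bigr => T' _ do rewrite fhat_ext.
by rewrite parseval.
Qed.

Lemma permptK l n (s : {perm 'I_l}) (Y : pt l n) : permpt s (permpt s^-1 Y) = Y.
Proof. by apply/ffunP => k; rewrite !ffunE permK. Qed.

Lemma permptKV l n (s : {perm 'I_l}) (Y : pt l n) : permpt s^-1 (permpt s Y) = Y.
Proof. by apply/ffunP => k; rewrite !ffunE permKV. Qed.

Lemma dot_perm l n (s : {perm 'I_l}) (T Y : pt l n) :
  dot T (permpt s^-1 Y) = dot (permpt s T) Y.
Proof.
rewrite /dot (reindex_inj (@perm_inj _ s)) /=.
by apply: eq_bigr => k _; rewrite !ffunE permK.
Qed.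

Lemma fhat_perm (R : realType) l n (s : {perm 'I_l}) (v : pt l n -> R) (T : pt l n) :
  fhat (fun X => v (permpt s X)) T = fhat v (permpt s T).
Proof.
rewrite /fhat /expectC; congr (_ / _).
rewrite (reindex (permpt s^-1)); last first.
  by exists (permpt s) => Y _; rewrite ?permptK ?permptKV.
by apply: eq_bigr => Y _; rewrite permptK !chi_om dot_perm.
Qed.

Definition sfun {l} (S : {set 'I_l}) (k : 'I_l) : nat :=
  if k \in S then index k (enum S) else (#|S| + index k (enum (~: S)))%N.

Lemma sfun_lt l (S : {set 'I_l}) k : (sfun S k < l)%N.
Proof.
rewrite /sfun; case: ifP => kS.
  have : (index k (enum S) < #|S|)%N by rewrite cardE index_mem mem_enum.
  move=> h; apply: leq_trans h _; apply: leq_trans (max_card (mem S)) _; by rewrite card_ord.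
have : (index k (enum (~: S)) < #|~: S|)%N by rewrite cardE index_mem mem_enum in_setC kS.
move=> h; have e : l = (#|S| + #|~: S|)%N by rewrite cardsC card_ord.
by rewrite [X in (_ < X)%N]e ltn_add2l.
Qed.

Definition sord {l} (S : {set 'I_l}) (k : 'I_l) : 'I_l := Ordinal (sfun_lt _ S k).

Lemma sord_inj l (S : {set 'I_l}) : injective (sord S).
Proof.
move=> k1 k2 /(congr1 val) /=; rewrite /sfun.
have lt1 : forall k, k \in S -> (index k (enum S) < #|S|)%N.
  by move=> k kS; rewrite cardE index_mem mem_enum.
case: ifP => h1; case: ifP => h2.
- move=> e; have h1' : k1 \in enum S by rewrite mem_enum.
  have h2' : k2 \in enum S by rewrite mem_enum.
  by rewrite -(nth_index k1 h1') e (nth_index k1 h2').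
- move=> e; have := lt1 _ h1; rewrite e; by rewrite ltnNge leq_addr.
- move=> e; have := lt1 _ h2; rewrite -e; by rewrite ltnNge leq_addr.
- move/addnI => e; have h1' : k1 \in enum (~: S) by rewrite mem_enum in_setC h1.
  have h2' : k2 \in enum (~: S) by rewrite mem_enum in_setC h2.
  by rewrite -(nth_index k1 h1') e (nth_index k1 h2').
Qed.

Definition sig {l} (S : {set 'I_l}) : {perm 'I_l} := perm (@sord_inj l S).

Lemma sig_lt l (S : {set 'I_l}) k : (sig S k < #|S|)%N = (k \in S).
Proof.
rewrite /sig permE /= /sfun; case: ifP => kS.
  by rewrite cardE index_mem mem_enum.
by rewrite ltnNge leq_addr.
Qed.

Definition supp {l n} (T : pt l n) : {set 'I_l} := [set j | nat_of_ord (T j) != 0%N].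

Lemma wt_supp l n (T : pt l n) : wt T = #|supp T|.
Proof. by []. Qed.

Lemma ext_lo l n i (hn : (0 < n)%N) (hi : (i <= l)%N) (T' : pt i n) (a : 'I_i) :
  ext hn hi T' (widen_ord hi a) = T' a.
Proof.
have -> : widen_ord hi a = cast_ord (subnKC hi) (lshift (l - i) a) by apply: val_inj.
by rewrite /ext catpt_lo.
Qed.

Lemma ext_hi l n i (hn : (0 < n)%N) (hi : (i <= l)%N) (T' : pt i n) (k : 'I_l) :
  (i <= k)%N -> nat_of_ord (ext hn hi T' k) = 0%N.
Proof.
move=> ik; rewrite /ext /catpt ffunE.
case: splitP => [a /= e|b e]; last by rewrite ffunE.
by move: (ltn_ord a); rewrite -e ltnNge ik.
Qed.

Definition gS {l n i} (hn : (0 < n)%N) (hi : (i <= l)%N) (S : {set 'I_l}) (T' : pt i n) : pt l n :=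
  permpt (sig S) (ext hn hi T').

Definition rS {l n i} (hi : (i <= l)%N) (S : {set 'I_l}) (T : pt l n) : pt i n :=
  [ffun a => T ((sig S)^-1%g (widen_ord hi a))].

Lemma rS_gS l n i (hn : (0 < n)%N) (hi : (i <= l)%N) (S : {set 'I_l}) (T' : pt i n) :
  rS hi S (gS hn hi S T') = T'.
Proof. by apply/ffunP => a; rewrite /rS ffunE /gS /permpt ffunE permKV ext_lo. Qed.

Lemma gS_rS l n i (hn : (0 < n)%N) (hi : (i <= l)%N) (S : {set 'I_l}) (T : pt l n) :
  #|S| = i -> supp T = S -> gS hn hi S (rS hi S T) = T.
Proof.
move=> cS sT; apply/ffunP => k; rewrite /gS ffunE.
case: (ltnP (sig S k) i) => h.
  have e : widen_ord hi (Ordinal h) = sig S k by apply: val_inj.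
  by rewrite -e ext_lo /rS ffunE e permK.
apply: val_inj; rewrite /= ext_hi //.
have : k \notin S by rewrite -sig_lt cS -leqNgt.
by rewrite -sT inE negbK => /eqP ->.
Qed.

Definition good {l n i} (hn : (0 < n)%N) (hi : (i <= l)%N) (S : {set 'I_l}) (T' : pt i n) : bool :=
  (wt (gS hn hi S T') == i) && (supp (gS hn hi S T') == S).

Lemma eta_decomp (R : realType) l n i (hn : (0 < n)%N) (hi : (i <= l)%N) (v : pt l n -> R) :
  eta_i v i = \sum_(S : {set 'I_l} | #|S| == i)
    ((Edelta2 hi (fun X => v (permpt (sig S) X)))%:C
     - \sum_(T' : pt i n | ~~ good hn hi S T') `|fhat v (gS hn hi S T')| ^+ 2).
Proof.
rewrite /eta_i (partition_big supp (fun S : {set 'I_l} => #|S| == i)) => [|T]; last by rewrite wt_supp.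
apply: eq_bigr => S /eqP cS.
rewrite (reindex_onto (gS hn hi S) (rS hi S)) => [|T /andP[_ /eqP sT]]; last exact: gS_rS.
rewrite Phi_fourier.
under [in RHS]eq_bigr => T' _ do rewrite fhat_perm -/(gS hn hi S T').
rewrite [in RHS](bigID (good hn hi S)) /= addrK.
by apply: eq_bigl => T'; rewrite rS_gS eqxx andbT.
Qed.

Definition lf {R : realType} {l n} (a v : pt l n -> R) : R := \sum_(Z : pt l n) a Z * v Z.

Lemma sum_ind (R : pzRingType) (T : finType) (a : T) (G : T -> R) :
  \sum_(X : T) (a == X)%:R * G X = G a.
Proof.
rewrite (bigD1 a) //= eqxx mul1r big1 ?addr0 // => X hX.
by rewrite eq_sym (negbTE hX) mul0r.
Qed.

Lemma lf_comp (R : realType) l n (K : finType) (w : K -> R) (f : K -> pt l n) (v : pt l n -> R) :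
  \sum_(k : K) w k * v (f k) = lf (fun Z => \sum_(k : K) w k * (f k == Z)%:R) v.
Proof.
rewrite /lf; under [in RHS]eq_bigr => Z _ do rewrite big_distrl /=.
rewrite exchange_big; apply: eq_bigr => k _.
under eq_bigr => Z _ do rewrite -mulrA mulrCA.
by rewrite sum_ind.
Qed.

Definition sosv {R : realType} {l n} (sq : seq (R * (pt l n -> R))) (v : pt l n -> R) : R :=
  \sum_(p <- sq) (p.1 + \sum_(Z : pt l n) p.2 Z * v Z) ^+ 2.

Definition mkSOS {R : realType} {l n} {K : finType} (P : pred K) (wg : K -> R) (a : K -> pt l n -> R)
  : seq (R * (pt l n -> R)) := [seq (0, fun Z => Num.sqrt (wg k) * a k Z) | k <- enum P].

Lemma sosv_mk (R : realType) l n (K : finType) (P : pred K) (wg : K -> R) (a : K -> pt l n -> R) v :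
  (forall k, P k -> 0 <= wg k) ->
  sosv (mkSOS P wg a) v = \sum_(k | P k) wg k * lf (a k) v ^+ 2.
Proof.
move=> hw; rewrite /sosv /mkSOS big_map big_enum_cond /=.
apply: eq_big => [k|k]; first by rewrite andbT.
rewrite andbT => hk; rewrite add0r /lf.
under eq_bigr => Z _ do rewrite -mulrA.
by rewrite -big_distrr exprMn sqr_sqrtr ?hw.
Qed.

Lemma sosv_cat (R : realType) l n (s1 s2 : seq (R * (pt l n -> R))) v :
  sosv (s1 ++ s2) v = sosv s1 v + sosv s2 v.
Proof. by rewrite /sosv big_cat. Qed.

Lemma sosv_flatten (R : realType) l n (ss : seq (seq (R * (pt l n -> R)))) v :
  sosv (flatten ss) v = \sum_(s <- ss) sosv s v.
Proof. by rewrite /sosv big_flatten. Qed.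

Lemma sosv_ge0 (R : realType) l n (sq : seq (R * (pt l n -> R))) v : 0 <= sosv sq v.
Proof. by rewrite /sosv sumr_ge0 // => p _; rewrite sqr_ge0. Qed.

Definition mkAX {R : realType} {l n} {K : finType} (P : pred K) (Xk : K -> pt l n)
  (sk : K -> {perm 'I_l}) (c : K -> pt l n -> R) : pt l n -> {perm 'I_l} -> pt l n -> R :=
  fun X s Z => \sum_(k | P k) ((Xk k == X)%:R * (sk k == s)%:R) * c k Z.

Lemma axv_mk (R : realType) l n (K : finType) (P : pred K) (Xk : K -> pt l n)
  (sk : K -> {perm 'I_l}) (c : K -> pt l n -> R) (v : pt l n -> R) :
  \sum_(X : pt l n) \sum_(s : {perm 'I_l})
     (0 + \sum_(Z : pt l n) mkAX P Xk sk c X s Z * v Z) * (v X - v (permpt s X))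
  = \sum_(k | P k) lf (c k) v * (v (Xk k) - v (permpt (sk k) (Xk k))).
Proof.
have step : forall X s, (0 + \sum_(Z : pt l n) mkAX P Xk sk c X s Z * v Z) * (v X - v (permpt s X))
   = \sum_(k | P k) (Xk k == X)%:R * ((sk k == s)%:R * (lf (c k) v * (v X - v (permpt s X)))).
  move=> X s; rewrite add0r /mkAX.
  under eq_bigr => Z _ do rewrite big_distrl /=.
  rewrite exchange_big big_distrl /=; apply: eq_bigr => k _.
  under eq_bigr => Z _ do rewrite -!mulrA.
  by rewrite -!big_distrr /lf /=; ring.
under eq_bigr => Y _ do under eq_bigr => t _ do rewrite step.
under eq_bigr => Y _ do rewrite exchange_big.
rewrite exchange_big; apply: eq_bigr => k _.
under eq_bigr => Y _ do rewrite -big_distrr /=.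
rewrite sum_ind.
by rewrite sum_ind.
Qed.

Lemma expect_lf (R : realType) l n (K : finType) (f : K -> pt l n) (v : pt l n -> R) :
  expect (fun x => v (f x)) = lf (fun Z => \sum_(x : K) (#|K|%:R)^-1 * (f x == Z)%:R) v.
Proof.
rewrite /expect -lf_comp big_distrl /=.
by apply: eq_bigr => x _; rewrite mulrC.
Qed.

Lemma ReD (R : realType) (x y : R[i]) : complex.Re (x + y) = complex.Re x + complex.Re y.
Proof. by case: x; case: y. Qed.
Lemma ImD (R : realType) (x y : R[i]) : complex.Im (x + y) = complex.Im x + complex.Im y.
Proof. by case: x; case: y. Qed.

Lemma Re_RC (R : realType) (x : R) (y : R[i]) : complex.Re (x%:C * y) = x * complex.Re y.
Proof. by case: y => a b /=; ring. Qed.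
Lemma Im_RC (R : realType) (x : R) (y : R[i]) : complex.Im (x%:C * y) = x * complex.Im y.
Proof. by case: y => a b /=; ring. Qed.

Lemma fhat_sum (R : realType) l n (v : pt l n -> R) (T : pt l n) :
  fhat v T = \sum_(X : pt l n) (v X)%:C * ((chi R T X)^*%C / #|pt l n|%:R).
Proof. by rewrite /fhat /expectC big_distrl; apply: eq_bigr => X _; rewrite mulrA. Qed.

Lemma Re_fhat (R : realType) l n (v : pt l n -> R) (T : pt l n) :
  complex.Re (fhat v T) = lf (fun Z => complex.Re ((chi R T Z)^*%C / #|pt l n|%:R)) v.
Proof.
rewrite fhat_sum (big_morph (@complex.Re R) (@ReD R) (_ : complex.Re (0 : R[i]) = 0)) /lf //.
by apply: eq_bigr => X _; rewrite Re_RC mulrC.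
Qed.

Lemma Im_fhat (R : realType) l n (v : pt l n -> R) (T : pt l n) :
  complex.Im (fhat v T) = lf (fun Z => complex.Im ((chi R T Z)^*%C / #|pt l n|%:R)) v.
Proof.
rewrite fhat_sum (big_morph (@complex.Im R) (@ImD R) (_ : complex.Im (0 : R[i]) = 0)) /lf //.
by apply: eq_bigr => X _; rewrite Im_RC mulrC.
Qed.

Lemma normsq (R : realType) (z : R[i]) : `|z| ^+ 2 = ((complex.Re z) ^+ 2 + (complex.Im z) ^+ 2)%:C.
Proof. by rewrite add_Re2_Im2. Qed.

Lemma lfZ (R : realType) l n (c : R) (g v : pt l n -> R) : lf (fun Z => c * g Z) v = c * lf g v.
Proof. by rewrite /lf big_distrr /=; apply: eq_bigr => Z _; rewrite mulrA. Qed.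

Lemma lfD (R : realType) l n (g1 g2 v : pt l n -> R) : lf (fun Z => g1 Z + g2 Z) v = lf g1 v + lf g2 v.
Proof. by rewrite /lf -big_split; apply: eq_bigr => Z _; rewrite mulrDl. Qed.

Definition dco {R : realType} {l n j} (hj : (j <= l)%N) (Y : pt j n) : pt l n -> R :=
  fun Z => \sum_(x : pt (l - j) n) (#|pt (l - j) n|%:R)^-1 * (catpt hj Y x == Z)%:R.

Definition dcoS {R : realType} {l n j} (s : {perm 'I_l}) (hj : (j <= l)%N) (Y : pt j n) : pt l n -> R :=
  fun Z => \sum_(x : pt (l - j) n) (#|pt (l - j) n|%:R)^-1 * (permpt s (catpt hj Y x) == Z)%:R.

Lemma delta_lf (R : realType) l n j (hj : (j <= l)%N) (v : pt l n -> R) Y :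
  delta hj v Y = lf (dco hj Y) v.
Proof. by rewrite /delta expect_lf. Qed.

Lemma deltaS_lf (R : realType) l n j (hj : (j <= l)%N) s (v : pt l n -> R) Y :
  delta hj (fun X => v (permpt s X)) Y = lf (dcoS s hj Y) v.
Proof. by rewrite /delta (@expect_lf R l n _ (fun x => permpt s (catpt hj Y x)) v). Qed.

Lemma Ed_sq (R : realType) l n j (hj : (j <= l)%N) (v : pt l n -> R) :
  Edelta2 hj v = \sum_(Y : pt j n) (#|pt j n|%:R)^-1 * lf (dco hj Y) v ^+ 2.
Proof.
rewrite /Edelta2 /expect big_distrl /=; apply: eq_bigr => Y _.
by rewrite mulrC delta_lf.
Qed.

Lemma Ed_diff (R : realType) l n i (hi : (i <= l)%N) s (v : pt l n -> R) :
  Edelta2 hi v - Edelta2 hi (fun X => v (permpt s X)) =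
  \sum_(Y : pt i n) \sum_(x : pt (l - i) n)
     lf (fun Z => (#|pt i n|%:R)^-1 * (#|pt (l - i) n|%:R)^-1 * (dco hi Y Z + dcoS s hi Y Z)) v
     * (v (catpt hi Y x) - v (permpt s (catpt hi Y x))).
Proof.
rewrite /Edelta2 /expect -mulrBl -sumrB big_distrl /=; apply: eq_bigr => Y _.
rewrite subr_sqr lfZ lfD -delta_lf -deltaS_lf -big_distrr /=.
rewrite sumrB -!/(expect _) /delta /expect -mulrBl.
ring.

Qed.

Definition wgt {R : realType} (l i : nat) (j : 'I_i.+1) : R :=
  2 ^+ i * 'C(l, i)%:R * 'C(i, j)%:R - (nat_of_ord j == i)%:R * 'C(l, i)%:R.

Lemma wgt_ge0 (R : realType) l i (j : 'I_i.+1) : 0 <= wgt (R:=R) l i j.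
Proof.
rewrite /wgt; case: eqP => [e|_]; last by rewrite mul0r subr0 !mulr_ge0 ?exprn_ge0 ?ler0n.
rewrite e binn mul1r mulr1 -[X in _ - X]mul1r -mulrBl mulr_ge0 ?ler0n // subr_ge0.
by apply: exprn_ege1; rewrite ler1n.
Qed.

Lemma rhs_split (R : realType) l n i (hi : (i <= l)%N) (F : pt l n -> R) :
  rhsC7 hi F - 'C(l, i)%:R * Edelta2 hi F =
  \sum_(j < i.+1) wgt l i j * Edelta2 (leq_trans (leq_ord j) hi) F.
Proof.
have h : \sum_(j < i.+1) ((nat_of_ord j == i)%:R * 'C(l, i)%:R) * Edelta2 (leq_trans (leq_ord j) hi) F
         = 'C(l, i)%:R * Edelta2 hi F.
  rewrite (bigD1 ord_max) //= eqxx mul1r big1 ?addr0 => [|j hj].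
    by have -> : leq_trans (leq_ord (@ord_max i)) hi = hi := bool_irrelevance _ _.
  have -> : (nat_of_ord j == i) = false.
    by apply/negbTE; apply: contra hj => /eqP e; apply/eqP/val_inj.
  by rewrite !mul0r.
rewrite /rhsC7 -h big_distrr /= -sumrB; apply: eq_bigr => j _.
by rewrite /wgt mulrBl !mulrA.
Qed.

Lemma sum_card (R : realType) l i (c : R) :
  \sum_(S : {set 'I_l} | #|S| == i) c = 'C(l, i)%:R * c.
Proof.
rewrite (eq_bigl (fun S => S \in [set S : {set 'I_l} | #|S| == i])) => [|S]; last by rewrite inE.
by rewrite sumr_const card_draws card_ord mulr_natl.
Qed.

Lemma sosA_eq (R : realType) l n i (hi : (i <= l)%N) (v : pt l n -> R) :
  sosv (flatten [seq mkSOS (K := pt j n) xpredT (fun _ => wgt (R:=R) l i j * (#|pt j n|%:R)^-1)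
                         (dco (R:=R) (leq_trans (leq_ord j) hi)) | j : 'I_i.+1 <- enum 'I_i.+1]) v
  = rhsC7 hi v - 'C(l, i)%:R * Edelta2 hi v.
Proof.
rewrite sosv_flatten big_map big_enum /= rhs_split; apply: eq_bigr => j _.
rewrite sosv_mk => [|Y _]; last by apply: mulr_ge0; [apply: wgt_ge0 | rewrite invr_ge0 ler0n].
rewrite Ed_sq big_distrr /=; apply: eq_big => // Y _; ring.
Qed.

Lemma axB_eq (R : realType) l n i (hi : (i <= l)%N) (v : pt l n -> R) :
  \sum_(k : {set 'I_l} * (pt i n * pt (l - i) n) | #|k.1| == i)
     lf (fun Z => (#|pt i n|%:R)^-1 * (#|pt (l - i) n|%:R)^-1
                  * (dco hi k.2.1 Z + dcoS (sig k.1) hi k.2.1 Z)) v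
     * (v (catpt hi k.2.1 k.2.2) - v (permpt (sig k.1) (catpt hi k.2.1 k.2.2)))
  = 'C(l, i)%:R * Edelta2 hi v - \sum_(S : {set 'I_l} | #|S| == i) Edelta2 hi (fun X => v (permpt (sig S) X)).
Proof.
rewrite -sum_card -sumrB.
under [in RHS]eq_bigr => S _ do rewrite Ed_diff pair_bigA /=.
rewrite [in RHS]pair_big /=.
by apply: eq_bigl => k; rewrite andbT.
Qed.

Lemma eta_eq (R : realType) l n i (hn : (0 < n)%N) (hi : (i <= l)%N) (v : pt l n -> R) :
  eta_i v i = (\sum_(S : {set 'I_l} | #|S| == i) Edelta2 hi (fun X => v (permpt (sig S) X))
     - (\sum_(k : {set 'I_l} * pt i n | (#|k.1| == i) && ~~ good hn hi k.1 k.2)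
           1 * lf (fun Z => complex.Re ((chi R (gS hn hi k.1 k.2) Z)^*%C / #|pt l n|%:R)) v ^+ 2
        + \sum_(k : {set 'I_l} * pt i n | (#|k.1| == i) && ~~ good hn hi k.1 k.2)
           1 * lf (fun Z => complex.Im ((chi R (gS hn hi k.1 k.2) Z)^*%C / #|pt l n|%:R)) v ^+ 2))%:C.
Proof.
rewrite eta_decomp sumrB rmorphB rmorph_sum; congr (_ - _).
rewrite pair_big_dep -big_split rmorph_sum; apply: eq_bigr => k _.
by rewrite normsq Re_fhat Im_fhat !mul1r.
Qed.

Theorem lemmaC7 (R : realType) (n l i : nat) (hn : (0 < n)%N) (hi : (i <= l)%N) :
  (forall F : pt l n -> R, perm_invariant F -> eta_i F i <= (rhsC7 hi F)%:C%C)
  /\ sos2_proof R n hi.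
Proof.
pose K := ({set 'I_l} * (pt i n * pt (l - i) n))%type.
pose P : pred K := fun k => #|k.1| == i.
pose Xk : K -> pt l n := fun k => catpt hi k.2.1 k.2.2.
pose sk : K -> {perm 'I_l} := fun k => sig k.1.
pose c : K -> pt l n -> R := fun k Z => (#|pt i n|%:R)^-1 * (#|pt (l - i) n|%:R)^-1
                  * (dco hi k.2.1 Z + dcoS (sig k.1) hi k.2.1 Z).
pose b := mkAX P Xk sk c.
pose K2 := ({set 'I_l} * pt i n)%type.
pose P2 : pred K2 := fun k => (#|k.1| == i) && ~~ good hn hi k.1 k.2.
pose ReCo : K2 -> pt l n -> R :=
  fun k Z => complex.Re ((chi R (gS hn hi k.1 k.2) Z)^*%C / #|pt l n|%:R).
pose ImCo : K2 -> pt l n -> R :=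
  fun k Z => complex.Im ((chi R (gS hn hi k.1 k.2) Z)^*%C / #|pt l n|%:R).
pose sqA := flatten [seq mkSOS (K := pt j n) xpredT (fun _ => wgt (R:=R) l i j * (#|pt j n|%:R)^-1)
                         (dco (R:=R) (leq_trans (leq_ord j) hi)) | j : 'I_i.+1 <- enum 'I_i.+1].
pose sqB := mkSOS P2 (fun _ => 1) ReCo ++ mkSOS P2 (fun _ => 1) ImCo.
have key : forall v : pt l n -> R,
  ((rhsC7 hi v)%:C - eta_i v i)%C =
  ((sosv (sqA ++ sqB) v
    + \sum_(X : pt l n) \sum_(s : {perm 'I_l})
         ((fun _ _ => 0) X s + \sum_(Z : pt l n) b X s Z * v Z) * (v X - v (permpt s X)))%:C)%C.
  move=> v.
  rewrite axv_mk sosv_cat sosA_eq /sqB sosv_cat !sosv_mk // (eta_eq _ _ _ _ hn) axB_eq.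
  rewrite -rmorphB; congr (_%:C).
  ring.
split; last by exists (sqA ++ sqB), (fun _ _ => 0), b; exact: key.
move=> F hF; have := key F.
rewrite big1 => [|X _]; last by rewrite big1 // => s _; rewrite -hF subrr mulr0.
rewrite addr0 => e.
by rewrite -subr_ge0 e ler0c sosv_ge0.
Qed.
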